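(* Let $L:\mathbb{R}^n\to\mathbb{R}$ be $\mathcal{C}^1$, convex, with a unique minimizer $z_1^*$ ($L^*=L(z_1^* )$), and with $\nabla L$ Lipschitz with constant $M>0$. Let $\zeta>0$, $\bar d(t)=\frac{3}{2(t+2)}$, $\bar\beta(t)=\frac{t-1}{t+2}$, $\bar a(\tau)=\frac{2}{\tau+2}$, and $$V_1(z,\tau):=\tfrac12|\bar a(\tau)(z_1-z_1^* )+z_2|^2+\tfrac{\zeta^2}{M}(L(z_1)-L^* ).$$ Then each maximal solution $t\mapsto(z(t),\tau(t))$ of the system $\dot z_1=z_2$, $\dot z_2=-2\bar d(\tau)z_2-\frac{\zeta^2}{M}\nabla L(z_1+\bar\beta(\tau)z_2)$, $\dot\tau=1$ on $\mathbb{R}^{2n}\times\mathbb{R}_{\ge0}$ with $\tau(0)=0$ satisfies $$V_1(z(t),t)\le\frac{9}{(t+2)^2}V_1(z(1),1)\quad\text{for all }t\ge1.$$ *)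

(* Defs.v *)
From HB Require Import structures.
From mathcomp Require Import all_boot all_order all_algebra.
From mathcomp Require Import all_classical all_reals all_analysis.
Set Implicit Arguments. Unset Strict Implicit. Unset Printing Implicit Defensive.
Import Order.TTheory GRing.Theory Num.Theory.
Import numFieldNormedType.Exports.
Local Open Scope ring_scope.

(* Euclidean inner product, squared norm and norm on R^n = 'rV[R]_n
   (the library's norm on matrices is the sup norm, so we fix the
   Euclidean one explicitly). *)
Definition dotv {R : realType} {n : nat} (u v : 'rV[R]_n) : R :=
  \sum_(i < n) u 0 i * v 0 i.
Definition sqnorm {R : realType} {n : nat} (u : 'rV[R]_n) : R := dotv u u.
Definition enorm {R : realType} {n : nat} (u : 'rV[R]_n) : R := Num.sqrt (sqnorm u).

Definition convex_fun {R : realType} {n : nat} (L : 'rV[R]_n -> R) : Prop :=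
  forall (x y : 'rV[R]_n) (s : R), 0 <= s -> s <= 1 ->
    L ((1 - s) *: x + s *: y) <= (1 - s) * L x + s * L y.

Definition unique_minimizer {R : realType} {n : nat} (L : 'rV[R]_n -> R)
  (z : 'rV[R]_n) : Prop :=
  (forall x, L z <= L x) /\ (forall x, (forall y, L x <= L y) -> x = z).

Definition has_gradient {R : realType} {n : nat} (L : 'rV[R]_n -> R)
  (gradL : 'rV[R]_n -> 'rV[R]_n) : Prop :=
  forall x, differentiable L x /\ forall v, 'd L x v = dotv (gradL x) v.

Definition dbar {R : realType} (t : R) : R := 3 / (2 * (t + 2)).
Definition betabar {R : realType} (t : R) : R := (t - 1) / (t + 2).
Definition abar {R : realType} (t : R) : R := 2 / (t + 2).

Definition V1 {R : realType} {n : nat} (L : 'rV[R]_n -> R) (M zeta : R)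
  (zs : 'rV[R]_n) (z1 z2 : 'rV[R]_n) (tau : R) : R :=
  2^-1 * sqnorm (abar tau *: (z1 - zs) + z2) + zeta ^+ 2 / M * (L z1 - L zs).

(* Main.v *)
Require Import Defs.
From HB Require Import structures.
From mathcomp Require Import all_boot all_order all_algebra.
From mathcomp Require Import all_classical all_reals all_analysis.
From mathcomp Require Import ring lra.
Import Order.TTheory GRing.Theory Num.Theory.
Import numFieldNormedType.Exports.
Local Open Scope classical_set_scope.
Local Open Scope ring_scope.

Section H.
Context {R : realType}.

Lemma is_derive_coord {m n} {M : R -> 'M[R]_(m,n)} {t : R} {D} i j :
  is_derive t 1 M D -> is_derive t 1 (fun s => M s i j) (D i j).
Proof.
move=> HM; have dM : derivable M t 1 by case: HM.
apply: DeriveDef; first exact: (proj1 (derivable_mxP M t 1) dM i j).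
by rewrite -(@derive_val _ _ _ _ _ _ _ HM) derive_mx // mxE.
Qed.

Lemma is_derive_mx m n (M : R -> 'M[R]_(m,n)) (t : R) (D : 'M[R]_(m,n)) :
  (forall i j, is_derive t 1 (fun s => M s i j) (D i j)) -> is_derive t 1 M D.
Proof.
move=> HM; have dM : derivable M t 1.
  by apply/derivable_mxP => i j; have := HM i j => -[].
apply: DeriveDef => //; rewrite derive_mx //; apply/matrixP => i j.
by rewrite mxE; have := HM i j => -[].
Qed.

Lemma is_derive_mulf {f g : R -> R} {t : R} {df dg} :
  is_derive t 1 f df -> is_derive t 1 g dg ->
  is_derive t 1 (fun s => f s * g s) (f t * dg + g t * df).
Proof. by move=> hf hg; have := is_deriveM hf hg. Qed.

Lemma is_derive_dotv {n} {u v : R -> 'rV[R]_n} {t : R} {du dv} :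
  is_derive t 1 u du -> is_derive t 1 v dv ->
  is_derive t 1 (fun s => dotv (u s) (v s)) (dotv du (v t) + dotv (u t) dv).
Proof.
move=> hu hv; rewrite /dotv.
have H := @is_derive_sum _ _ _ n (fun i s => u s 0 i * v s 0 i) t 1
  (fun i => u t 0 i * dv 0 i + v t 0 i * du 0 i)
  (fun i => is_derive_mulf (is_derive_coord 0 i hu) (is_derive_coord 0 i hv)).
rewrite fct_sumE in H.
apply: (is_derive_eq H).
rewrite -big_split /=; apply: eq_bigr => i _; rewrite (mulrC (du 0 i)); exact: addrC.
Qed.

Lemma is_derive_scalef {n} {k : R -> R} {u : R -> 'rV[R]_n} {t : R} {dk du} :
  is_derive t 1 k dk -> is_derive t 1 u du ->
  is_derive t 1 (fun s => k s *: u s) (k t *: du + dk *: u t).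
Proof.
move=> hk hu; apply: is_derive_mx => i j.
rewrite (_ : (fun s => (k s *: u s) i j) = (fun s => k s * u s i j)); last first.
  by apply/funext => s; rewrite mxE.
apply: (is_derive_eq (is_derive_mulf hk (is_derive_coord i j hu))).
by rewrite !mxE (mulrC (u t i j)).
Qed.


Lemma dotvC {n} (u v : 'rV[R]_n) : dotv u v = dotv v u.
Proof. by apply: eq_bigr => i _; rewrite mulrC. Qed.
Lemma dotvDl {n} (u v w : 'rV[R]_n) : dotv (u + v) w = dotv u w + dotv v w.
Proof. by rewrite /dotv -big_split; apply: eq_bigr => i _; rewrite mxE mulrDl. Qed.
Lemma dotvDr {n} (u v w : 'rV[R]_n) : dotv w (u + v) = dotv w u + dotv w v.
Proof. by rewrite dotvC dotvDl !(dotvC w). Qed.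
Lemma dotvZl {n} a (u v : 'rV[R]_n) : dotv (a *: u) v = a * dotv u v.
Proof. by rewrite /dotv mulr_sumr; apply: eq_bigr => i _; rewrite mxE mulrA. Qed.
Lemma dotvZr {n} a (u v : 'rV[R]_n) : dotv v (a *: u) = a * dotv v u.
Proof. by rewrite dotvC dotvZl dotvC. Qed.
Lemma dotvNl {n} (u v : 'rV[R]_n) : dotv (- u) v = - dotv u v.
Proof. by rewrite -scaleN1r dotvZl mulN1r. Qed.
Lemma dotvNr {n} (u v : 'rV[R]_n) : dotv v (- u) = - dotv v u.
Proof. by rewrite dotvC dotvNl dotvC. Qed.

Lemma grad_ineq n (L : 'rV[R]_n -> R) gradL :
  has_gradient L gradL -> convex_fun L ->
  forall x y, L y + dotv (gradL y) (x - y) <= L x.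
Proof.
move=> hg hc x y; have [dL hd] := hg y; set v := x - y.
have der : 'D_v L y = dotv (gradL y) v by rewrite deriveE // hd.
have dv : derivable L y v by apply: diff_derivable.
rewrite -der.
set g := (fun h : R => h^-1 *: ((L \o shift y) (h *: v) - L y)).
have hl : g @ 0^' --> 'D_v L y := dv.
have hr : g @ at_right 0 --> 'D_v L y.
  move=> A /hl /nbhs_ballP [_ /posnumP[e] xe_A].
  by exists e%:num => //= z xe_z /gt_eqF/negbT/xe_A; exact.
suff : 'D_v L y <= L x - L y by lra.
apply: (cvgr_to_le hr); near=> h.
have h0 : 0 < h by near: h; exact: nbhs_right_gt.
have h1 : h <= 1 by near: h; apply: nbhs_right_le; exact: ltr01.
rewrite /g /= /shift.
have -> : h *: v + y = (1 - h) *: y + h *: x.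
  by apply/rowP => j; rewrite /v !mxE; ring.
have H := hc y x h (ltW h0) h1.
rewrite [X in X <= _](_ : _ = (L ((1 - h) *: y + h *: x) - L y) / h); last by rewrite mulrC.
rewrite ler_pdivrMr //; nra.
Unshelve. all: by end_near.
Qed.


Lemma is_derive_Lcomp {n} {L : 'rV[R]_n -> R} {gradL} {z : R -> 'rV[R]_n} {t : R} {dz} :
  has_gradient L gradL -> is_derive t 1 z dz ->
  is_derive t 1 (fun s => L (z s)) (dotv (gradL (z t)) dz).
Proof.
move=> hg hz; have [dL hd] := hg (z t).
have dz1 : derivable z t 1 by case: hz.
have diffz : differentiable z t by apply/derivable1_diffP.
have dc : differentiable (L \o z) t by apply: differentiable_comp.
change (is_derive t 1 (L \o z) (dotv (gradL (z t)) dz)).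
apply: DeriveDef; first by apply/derivable1_diffP.
rewrite deriveE // diff_comp //= hd -[X in dotv _ X]deriveE //.
by rewrite (@derive_val _ _ _ _ _ _ _ hz).
Qed.


Lemma is_derive_addf {W : normedModType R} {f g : R -> W} {t : R} {df dg} :
  is_derive t 1 f df -> is_derive t 1 g dg ->
  is_derive t 1 (fun s => f s + g s) (df + dg).
Proof. by move=> hf hg; have := is_deriveD hf hg. Qed.

Lemma is_derive_subf {W : normedModType R} {f g : R -> W} {t : R} {df dg} :
  is_derive t 1 f df -> is_derive t 1 g dg ->
  is_derive t 1 (fun s => f s - g s) (df - dg).
Proof. by move=> hf hg; have := is_deriveB hf hg. Qed.

Lemma is_derive_cstf {W : normedModType R} (k : W) (t : R) :
  is_derive t 1 (fun _ : R => k) 0.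
Proof. exact: is_derive_cst. Qed.

Lemma is_derive_idf (t : R) : is_derive t 1 (fun s : R => s) 1.
Proof. exact: is_derive_id. Qed.

Lemma is_derive_sqf {f : R -> R} {t : R} {df} :
  is_derive t 1 f df -> is_derive t 1 (fun s => f s ^+ 2) (2 * f t * df).
Proof.
move=> hf; rewrite (_ : (fun s => f s ^+ 2) = (fun s => f s * f s)); last first.
  by apply/funext => s; rewrite expr2.
have H := is_derive_mulf hf hf; apply: (is_derive_eq H); ring.
Qed.

Lemma is_derive_invf {f : R -> R} {t : R} {df} :
  f t != 0 -> is_derive t 1 f df -> is_derive t 1 (fun s => (f s)^-1) (- (f t)^-2 * df).
Proof.
move=> ft hf; have d : derivable f t 1 by case: hf.
apply: DeriveDef; first exact: derivableV.
by rewrite deriveV // (@derive_val _ _ _ _ _ _ _ hf).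
Qed.

Lemma is_derive_abar (t : R) : 0 < t ->
  is_derive t 1 (@abar R) (- (2 / (t + 2) ^+ 2)).
Proof.
move=> t0; have t2 : t + 2 != 0 by rewrite lt0r_neq0 // addr_gt0.
rewrite (_ : abar = (fun s => 2 * (s + 2)^-1)); last by apply/funext.
have h := is_derive_addf (is_derive_idf t) (is_derive_cstf (2 : R) t).
have hi := is_derive_invf (f := fun s => s + 2) t2 h.
have H := is_derive_mulf (is_derive_cstf (2 : R) t) hi; apply: (is_derive_eq H).
by rewrite mulr0 addr0 addr0 /= mulr1 mulrN.
Qed.

End H.

Theorem proposition5p4 (R : realType) (n : nat) (L : 'rV[R]_n -> R)
  (gradL : 'rV[R]_n -> 'rV[R]_n) (zs : 'rV[R]_n) (M zeta : R)
  (hgrad : has_gradient L gradL)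
  (hcont : continuous gradL)
  (hconv : convex_fun L)
  (hmin : unique_minimizer L zs)
  (hM : 0 < M)
  (hLip : forall x y, enorm (gradL x - gradL y) <= M * enorm (x - y))
  (hzeta : 0 < zeta)
  (z1 z2 : R -> 'rV[R]_n)
  (hcont0 : {within [set t : R | 0 <= t], continuous z1} /\
            {within [set t : R | 0 <= t], continuous z2})
  (hode1 : forall t : R, 0 < t -> is_derive t 1 z1 (z2 t))
  (hode2 : forall t : R, 0 < t ->
     is_derive t 1 z2 (- (2 * dbar t) *: z2 t
                       - (zeta ^+ 2 / M) *: gradL (z1 t + betabar t *: z2 t))) :
  forall t : R, 1 <= t ->
    V1 L M zeta zs (z1 t) (z2 t) t
      <= 9 / (t + 2) ^+ 2 * V1 L M zeta zs (z1 1) (z2 1) 1.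
Proof.
move=> t ht.
set c := zeta ^+ 2 / M.
have hc : 0 < c by rewrite /c divr_gt0 // exprn_gt0.
pose w s := abar s *: (z1 s - zs) + z2 s.
pose F s := (s + 2) ^+ 2 * (2^-1 * dotv (w s) (w s) + c * (L (z1 s) - L zs)).
have FV s : F s = (s + 2) ^+ 2 * V1 L M zeta zs (z1 s) (z2 s) s by [].
have GI := @grad_ineq _ _ _ _ hgrad hconv.
have key : forall s : R, 0 < s -> exists2 dF : R, is_derive s 1 F dF & (1 < s -> dF <= 0).
  move=> s s0.
  have T0 : 0 < s + 2 by rewrite addr_gt0.
  set g := gradL (z1 s + betabar s *: z2 s).
  have he : is_derive s 1 (fun r => z1 r - zs) (z2 s - 0) :=
    is_derive_subf (hode1 s s0) (is_derive_cstf zs s).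
  have hw := is_derive_addf (is_derive_scalef (is_derive_abar s s0) he) (hode2 s s0).
  have dwE : (abar s *: (z2 s - 0) + - (2 / (s + 2) ^+ 2) *: (z1 s - zs)) +
      (- (2 * dbar s) *: z2 s - c *: g) = - (abar s / 2) *: w s - c *: g.
    apply/rowP => j; rewrite /w !mxE /abar /dbar; field.
    by rewrite lt0r_neq0.
  rewrite dwE in hw.
  have hS := is_derive_dotv hw hw.
  have hL := is_derive_Lcomp hgrad (hode1 s s0).
  have hV := is_derive_addf (is_derive_mulf (is_derive_cstf (2^-1 : R) s) hS)
    (is_derive_mulf (is_derive_cstf c s) (is_derive_subf hL (is_derive_cstf (L zs) s))).
  have hT := is_derive_sqf (is_derive_addf (is_derive_idf s) (is_derive_cstf (2:R) s)).
  have hF := is_derive_mulf hT hV.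
  eexists; first exact: hF.
  move=> s1.
  have gw : dotv g (w s) = abar s * dotv g (z1 s - zs) + dotv g (z2 s).
    by rewrite /w /= (dotvDr (abar s *: (z1 s - zs))) dotvZr.
  rewrite -/(w s) (dotvC (w s) (- _ *: w s - c *: g)) dotvDl dotvNl !dotvZl gw.
  move: (dotv (w s) (w s)) => W2.
  set Ge := dotv g (z1 s - zs); set Gp := dotv g (z2 s).
  set G1p := dotv (gradL (z1 s)) (z2 s).
  set y := z1 s + betabar s *: z2 s.
  have hA := GI zs y; have hB := GI y (z1 s); have hC := GI (z1 s) y.
  have e1 : zs - y = - ((z1 s - zs) + betabar s *: z2 s).
    by apply/rowP => j; rewrite /y !mxE; ring.
  have e2 : y - z1 s = betabar s *: z2 s.
    by apply/rowP => j; rewrite /y !mxE; ring.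
  have e3 : z1 s - y = - (betabar s *: z2 s).
    by apply/rowP => j; rewrite /y !mxE; ring.
  rewrite e1 dotvNr dotvDr dotvZr -/g -/Ge -/Gp in hA.
  rewrite e2 dotvZr -/G1p in hB.
  rewrite e3 dotvNr dotvZr -/g -/Gp in hC.
  have Tn : s + 2 != 0 by rewrite lt0r_neq0.
  have -> : (s + 2) ^+ 2 * (2^-1 * (- (abar s / 2) * W2 - c * (abar s * Ge + Gp) +
     (- (abar s / 2) * W2 - c * (abar s * Ge + Gp))) + W2 * 0 +
     (c * (G1p - 0) + (L (z1 s) - L zs) * 0)) +
     (2^-1 * W2 + c * (L (z1 s) - L zs)) * (2 * (s + 2) * (1 + 0)) =
     c * (s + 2) * (2 * (L (z1 s) - L zs) - 2 * Ge - (s + 2) * (Gp - G1p)).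
    by rewrite /abar; field.
  have bpos : 0 < betabar s by rewrite /betabar divr_gt0 // subr_gt0.
  have b1 : 2 * betabar s <= s + 2.
    rewrite /betabar mulrA ler_pdivrMr //; nra.
  have X0 : 0 <= Gp - G1p.
    have : 0 <= betabar s * (Gp - G1p) by nra.
    by rewrite pmulr_rge0.
  have hX : 2 * betabar s * (Gp - G1p) <= (s + 2) * (Gp - G1p) by rewrite ler_wpM2r.
  rewrite pmulr_rle0; last exact: mulr_gt0 hc T0.
  nra.
have H1 : forall x, x \in `]1, t[ -> derivable F x 1.
  move=> x; rewrite in_itv /= => /andP[x1 _].
  by have [dF hd _] := key x (lt_trans ltr01 x1); case: hd.
have H2 : forall x, x \in `]1, t[ -> derive1 F x <= 0.
  move=> x; rewrite in_itv /= => /andP[x1 _].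
  have [dF hd hle] := key x (lt_trans ltr01 x1).
  by rewrite derive1E (@derive_val _ _ _ _ _ _ _ hd); exact: hle.
have H3 : {within `[1, t], continuous F}.
  apply: derivable_within_continuous => x; rewrite in_itv /= => /andP[x1 _].
  by have [dF hd _] := key x (lt_le_trans ltr01 x1); case: hd.
have hF1 := @ler0_derive1_nincr R F 1 t H1 H2 H3 1 t (lexx _) ht (lexx _).
rewrite !FV in hF1.
have T0 : 0 < (t + 2) ^+ 2 by rewrite exprn_gt0 // addr_gt0 // (lt_le_trans ltr01 ht).
rewrite mulrAC ler_pdivlMr //.
have -> : (9 : R) = (1 + 2) ^+ 2 by rewrite expr2; ring.
by rewrite mulrC.
Qed.
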